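(* Let $S_1,S_2\subset[n]$ be two disjoint nonempty subsets with $|S_1|=s_1$ and $|S_2|=s_2$, and let $s=s_1+s_2$, where $n/s$ is a positive integer. For $i\in\{1,2\}$, let $S_{i^c}$ denote the other set in $\{S_1,S_2\}$. Consider performing $t_i$ independent trials, each of which samples $n/s$ items uniformly without replacement from $[n]$. Given $\epsilon_i>0$, if $t_i\ge \frac{e^5}{4\pi^2}\log\frac{1}{\epsilon_i}\cdot\frac{s}{s_i}$, then with probability at least $1-\epsilon_i$ there exists a trial (among the $t_i$ performed) whose sampled set contains exactly one item from $S_i$ and no item from $S_{i^c}$.
   Context: $\log$ denotes the natural logarithm. *)

(* Defs.v *)
From HB Require Import structures.
From mathcomp Require Import all_boot all_order all_algebra.
From mathcomp Require Import all_classical all_reals all_analysis.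
Set Implicit Arguments. Unset Strict Implicit. Unset Printing Implicit Defensive.
Import Order.TTheory GRing.Theory Num.Theory.
Local Open Scope ring_scope.

(* Sample space of [t] independent trials, each drawing [k] items uniformly
   without replacement from [n] = 'I_n: a trial outcome is a k-subset of 'I_n,
   and the joint outcome is a t-indexed family of k-subsets, with the uniform
   (= product of uniforms) distribution. *)
Definition trials (n t k : nat) : {set {ffun 'I_t -> {set 'I_n}}} :=
  [set f : {ffun 'I_t -> {set 'I_n}} | [forall j, #|f j| == k]].

Definition good_event (n t k : nat) (A B : {set 'I_n})
  : {set {ffun 'I_t -> {set 'I_n}}} :=
  [set f in trials n t k |
     [exists j, (#|f j :&: A| == 1)%N && (f j :&: B == finset.set0)]].

Definition success_prob (R : realType) (n t k : nat) (A B : {set 'I_n}) : R :=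
  (#|@good_event n t k A B|)%:R / (#|trials n t k|)%:R.

(* Main.v *)
Require Import Defs.
From HB Require Import structures.
From mathcomp Require Import all_boot all_order all_algebra.
From mathcomp Require Import all_classical all_reals all_analysis.
From mathcomp Require Import ring lra zify.
Import Order.TTheory GRing.Theory Num.Theory.
Import numFieldNormedType.Exports.
Local Open Scope ring_scope.

Lemma pair_pos (R : realType) (x : R) N : odd N -> 0 < x -> x ^+ 2 < 4 ->
  0 < - ((-1) ^+ N * x ^+ N.*2 / N.*2`!%:R) - 
       ((-1) ^+ N.+1 * x ^+ N.+1.*2 / N.+1.*2`!%:R).
Proof.
move=> oN x0 x4.
have e1 : (-1) ^+ N = -1 :> R by rewrite -signr_odd oN expr1.
have e2 : (-1) ^+ N.+1 = 1 :> R by rewrite exprS e1 mulrN1 opprK.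
rewrite e1 e2 !mulN1r !mul1r mulNr opprK doubleS !factS.
have hy : 0 < x ^+ N.*2 by rewrite exprn_gt0.
have hf : (0 : R) < N.*2`!%:R by rewrite ltr0n fact_gt0.
set y := x ^+ N.*2 in hy *; set F := N.*2`!%:R in hf *.
have -> : x ^+ N.*2.+2 = x ^+ 2 * y by rewrite /y -exprD add2n.
rewrite !natrM.
have hN : (2 : R) <= N.*2.+1%:R by rewrite ler_nat; lia.
have hN' : (2 : R) <= N.*2.+2%:R by rewrite ler_nat; lia.
set a := N.*2.+1%:R in hN *; set b := N.*2.+2%:R in hN' *.
have -> : x ^+ 2 * y / (b * (a * F)) = (y / F) * (x ^+ 2 / (a * b)).
  by field; rewrite ?(gt_eqF hf) ?(gt_eqF) //; lra.
rewrite -[X in 0 < X - _]mulr1 -mulrBr; apply: mulr_gt0; first by rewrite divr_gt0.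
rewrite subr_gt0 ltr_pdivrMr; last by nra.
nra.
Qed.

Lemma cos_coeff'_sign (R : realType) (x : R) n :
  cos_coeff' x n = (-1) ^+ n * x ^+ n.*2 / n.*2`!%:R.
Proof. by rewrite /cos_coeff' -exprnP. Qed.

Lemma cos85_lt0 (R : realType) : cos (8 / 5 : R) < 0.
Proof.
set x : R := 8 / 5.
rewrite -(opprK (cos _)) oppr_lt0; have /cvgN h := @cvg_cos_coeff' R x.
rewrite -(cvg_lim (@Rhausdorff R) h).
apply: (@lt_trans _ _ (\sum_(0 <= i < 3) - cos_coeff' x i)).
  do 3 rewrite big_nat_recl//; rewrite big_nil addr0 !cos_coeff'_sign.
  rewrite /x /= !factS fact0 /= !expr0 !expr1 !exprS !expr0.
  lra.
rewrite -seriesN lt_sum_lim_series //.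
  by move/cvgP in h; by rewrite seriesN.
move=> d.
rewrite addnS !cos_coeff'_sign; apply: pair_pos.
- by rewrite oddD odd_double.
- rewrite /x; lra.
- rewrite /x expr2; lra.
Qed.

Lemma pi_lt165 (R : realType) : pi < (16 / 5 : R).
Proof.
rewrite ltNge; apply/negP => h.
have := cos85_lt0 R; rewrite ltNge => /negP; apply.
apply: cos_ge0_pihalf; apply/andP; split; lra.
Qed.

Lemma expR4_ge (R : realType) : 1024 / 25 <= expR (4 : R).
Proof.
have -> : (4 : R) = 32%:R * (1 / 8) by rewrite -[32%:R]/(32 : R); lra.
rewrite expRM_natl.
have h1 : 9 / 8 <= expR (1 / 8 : R) by have := expR_ge1Dx (1 / 8 : R); lra.
have h2 : (9 / 8 : R) ^+ 32 <= expR (1 / 8 : R) ^+ 32.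
  by apply: lerXn2r; rewrite ?nnegrE; lra.
apply: le_trans h2.
have -> : (9 / 8 : R) ^+ 32 = (((((9 / 8) ^+ 2) ^+ 2) ^+ 2) ^+ 2) ^+ 2.
  by rewrite -!exprM.
have a1 : (8 / 5 : R) <= ((9 / 8) ^+ 2) ^+ 2 by rewrite !expr2; lra.
have a2 : (64 / 25 : R) <= (((9 / 8) ^+ 2) ^+ 2) ^+ 2.
  apply: le_trans (_ : (8/5 : R) ^+ 2 <= _); first by rewrite expr2; lra.
  by apply: lerXn2r; rewrite ?nnegrE; lra.
have a3 : (13 / 2 : R) <= ((((9 / 8) ^+ 2) ^+ 2) ^+ 2) ^+ 2.
  apply: le_trans (_ : (64/25 : R) ^+ 2 <= _); first by rewrite expr2; lra.
  by apply: lerXn2r; rewrite ?nnegrE; lra.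
apply: le_trans (_ : (13/2 : R) ^+ 2 <= _); first by rewrite expr2; lra.
by apply: lerXn2r; rewrite ?nnegrE; lra.
Qed.

Lemma pow_le_e (R : realType) (m : nat) :
  (m.+1%:R : R) ^+ m <= expR 1 * (m%:R) ^+ m.
Proof.
case: m => [|m]; first by rewrite !expr0 mulr1; have := expR_ge1Dx (1 : R); lra.
have hm : (0 : R) < m.+1%:R by rewrite ltr0n.
have -> : (m.+2%:R : R) = m.+1%:R * (1 + 1 / m.+1%:R).
  by rewrite mulrDr mulr1 mulrCA divff ?gt_eqF // mulr1 -natr1.
rewrite exprMn mulrC; apply: ler_wpM2r; first by rewrite exprn_ge0 // ltW.
apply: (@le_trans _ _ (expR (1 / m.+1%:R) ^+ m.+1)).
  apply: lerXn2r; rewrite ?nnegrE ?expR_ge0 ?expR_ge1Dx //.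
by rewrite -expRM_natl mulrCA divff ?gt_eqF // mulr1.
Qed.

Lemma ffact_ineq (m s j : nat) : (0 < s)%N -> (j <= m)%N ->
  ((m.+1 * s - 1) ^_ j * m ^ j <= (m.+1 * s - s) ^_ j * m.+1 ^ j)%N.
Proof.
move=> s0; elim: j => [|j IH] hj; first by rewrite !ffactn0 !expn0.
rewrite !ffactnSr !expnS.
have IH' := IH (ltnW hj).
have step : ((m.+1 * s - 1 - j) * m <= (m.+1 * s - s - j) * m.+1)%N.
  have -> : (m.+1 * s - s = m * s)%N by rewrite mulSn addKn.
  have hms : (m <= m * s)%N by rewrite leq_pmulr.
  nia.
move: (leq_mul IH' step).
set P := (_ ^_ j); set Q := (_ ^_ j); set U := (_ - j)%N; set V := (_ - j)%N.
set A := (m ^ j)%N; set B := (m.+1 ^ j)%N.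
lia.
Qed.

Definition Gd (n k : nat) (A B : {set 'I_n}) : {set {set 'I_n}} :=
  [set X : {set 'I_n} | [&& #|X| == k, #|X :&: A| == 1%N & X :&: B == finset.set0]].
Definition Kd (n k : nat) : {set {set 'I_n}} := [set X : {set 'I_n} | #|X| == k].

Lemma card_good n t k (A B : {set 'I_n}) :
  #|good_event t k A B| = (#|Kd n k| ^ t - #|Kd n k :\: Gd n k A B| ^ t)%N.
Proof.
have eT : #|trials n t k| = (#|Kd n k| ^ t)%N.
  rewrite -[t in RHS]card_ord -card_ffun_on; apply: eq_card => f.
  rewrite inE; apply/forallP/ffun_onP => H j; move: (H j); by rewrite inE.
set bad := [set f : {ffun 'I_t -> {set 'I_n}} | [forall j, f j \in Kd n k :\: Gd n k A B]].
have eB : #|bad| = (#|Kd n k :\: Gd n k A B| ^ t)%N.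
  rewrite -[t in RHS]card_ord -card_ffun_on; apply: eq_card => f.
  rewrite inE; apply/forallP/ffun_onP => H j; exact: (H j).
have -> : good_event t k A B = trials n t k :\: bad.
  apply/setP => f; rewrite !inE.
  case: (boolP [forall j, #|f j| == k]) => /= hf; last by rewrite andbF.
  rewrite andbT negb_forall; apply/existsP/existsP => -[j hj]; exists j.
    by rewrite !inE (forallP hf j) /= andbT negbK.
  by move: hj; rewrite !inE (forallP hf j) /= andbT negbK.
rewrite cardsDS ?eT ?eB //.
apply/fintype.subsetP => f; rewrite !inE => /forallP H; apply/forallP => j.
by move: (H j); rewrite !inE => /andP[].
Qed.

Lemma card_Gd_ge n k (A B : {set 'I_n}) : [disjoint A & B] -> (0 < k)%N ->
  (#|A| * 'C(n - (#|A| + #|B|), k.-1) <= #|Gd n k A B|)%N.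
Proof.
move=> dAB k0.
set U := ~: (A :|: B).
have cU : #|U| = (n - (#|A| + #|B|))%N.
  have := cardsC (A :|: B); rewrite card_ord cardsU (disjoint_setI0 dAB) cards0 subn0.
  rewrite /U; lia.
set D := finset.setX A [set X : {set 'I_n} | X \subset U & #|X| == k.-1].
have cD : #|D| = (#|A| * 'C(n - (#|A| + #|B|), k.-1))%N by rewrite cardsX cards_draws cU.
rewrite -cD.
have memD : forall p, p \in D -> [/\ p.1 \in A, p.2 \subset U & #|p.2| = k.-1].
  by move=> [x X]; rewrite !inE /= => /andP[-> /andP[-> /eqP ->]].
have nU : forall p, p \in D -> forall y, y \in p.2 -> (y \notin A) && (y \notin B).
  move=> p /memD[_ sU _] y /(fintype.subsetP sU); rewrite !inE negb_or; done.
have xnot : forall p, p \in D -> p.1 \notin p.2.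
  move=> p hp; apply/negP => h; have := nU p hp _ h; by case/memD: hp => -> _ _.
have IA : forall p, p \in D -> (p.1 |: p.2) :&: A = [set p.1].
  move=> p hp; apply/setP => y; rewrite !inE.
  case: (eqVneq y p.1) => [->|ny] /=; first by case/memD: hp => ->.
  by case: (boolP (y \in p.2)) => //= h; have /andP[/negbTE -> _] := nU p hp y h.
rewrite -(card_in_imset (f := fun p : 'I_n * {set 'I_n} => p.1 |: p.2)).
  apply: subset_leq_card; apply/fintype.subsetP => _ /imsetP[p hp ->].
  rewrite !inE IA // cards1 eqxx /= cardsU1 xnot //=.
  have [hA _ hc] := memD p hp; rewrite hc add1n prednK // eqxx /=.
  apply/eqP/setP => y; rewrite !inE.
  case: (eqVneq y p.1) => [->|ny] /=; first exact: disjointFr dAB hA.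
  by case: (boolP (y \in p.2)) => //= h; have /andP[_ /negbTE ->] := nU p hp y h.
move=> p q hp hq /= e.
have e1 : p.1 = q.1.
  by apply/set1P; rewrite -(IA q hq) -e (IA p hp) set11.
have e2 : p.2 = q.2 by rewrite -(setU1K (xnot p hp)) -(setU1K (xnot q hq)) e e1.
by case: p q {hp hq e} e1 e2 => ? ? [? ?] /= -> ->.
Qed.

Lemma expn_monol (x y t : nat) : (y <= x)%N -> (y ^ t <= x ^ t)%N.
Proof. by move=> h; elim: t => [|t IH]; rewrite ?expn0 // !expnS leq_mul. Qed.

Lemma card_trials n t k : #|trials n t k| = (#|Kd n k| ^ t)%N.
Proof.
rewrite -[t in RHS]card_ord -card_ffun_on; apply: eq_card => f.
rewrite inE; apply/forallP/ffun_onP => H j; move: (H j); by rewrite inE.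
Qed.

Lemma main_gen (R : realType) n (A B : {set 'I_n}) (eps : R) t :
  A != finset.set0 -> [disjoint A & B] -> (#|A| + #|B| %| n)%N -> 0 < eps ->
  expR 5 / (4 * pi ^+ 2) * ln (1 / eps) * ((#|A| + #|B|)%N%:R / (#|A|)%:R) <= t%:R ->
  1 - eps <= @success_prob R n t (n %/ (#|A| + #|B|))%N A B.
Proof.
move=> A0 dAB hdiv heps ht.
set s := (#|A| + #|B|)%N in hdiv ht *.
set k := (n %/ s)%N.
have sA : (0 < #|A|)%N by rewrite card_gt0.
have s0 : (0 < s)%N by rewrite /s; lia.
have sn : (s <= n)%N.
  have h := subset_leq_card (finset.subsetT (A :|: B)).
  by rewrite cardsT card_ord cardsU (disjoint_setI0 dAB) cards0 subn0 in h.
have nks : n = (k * s)%N by rewrite /k divnK.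
have k0 : (0 < k)%N by move: sn; rewrite nks; case: (k) => //; rewrite mul0n; lia.
set m := k.-1.
have km : k = m.+1 by rewrite /m prednK.
set c := #|Kd n k|.
have cE : c = 'C(n, k) by rewrite /c card_draws card_ord.
have c0 : (0 < c)%N by rewrite cE bin_gt0 nks leq_pmulr.
set g := #|Gd n k A B|.
have GK : Gd n k A B \subset Kd n k.
  by apply/fintype.subsetP => X; rewrite !inE => /andP[].
have cgE : #|Kd n k :\: Gd n k A B| = (c - g)%N by rewrite cardsDS.
have gc : (g <= c)%N by apply: subset_leq_card.
have probE : @success_prob R n t k A B = 1 - (1 - g%:R / c%:R) ^+ t.
  rewrite /success_prob card_good card_trials cgE -/c natrB; last exact: expn_monol (leq_subr _ _).
  have cR : (c%:R : R) != 0 by rewrite pnatr_eq0 -lt0n.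
  rewrite natrX natrX natrB // mulrBl divff ?expf_neq0 //.
  by rewrite -expr_div_n mulrBl divff // mul1r.
rewrite probE.
set p := g%:R / c%:R.
have cR0 : (0 : R) < c%:R by rewrite ltr0n.
have p0 : 0 <= p by rewrite divr_ge0.
have p1 : p <= 1 by rewrite ler_pdivrMr // mul1r ler_nat.
have [eps1|eps1] := leP 1 eps.
  have : 0 <= (1 - p) ^+ t by apply: exprn_ge0; rewrite subr_ge0.
  have : (1 - p) ^+ t <= 1 by apply: exprn_ile1; [rewrite subr_ge0 | lra].
  lra.
set a := (m.+1 * s - s)%N; set b := (m.+1 * s - 1)%N.
have gge : (#|A| * 'C(a, m) <= g)%N.
  have := card_Gd_ge n k A B dAB k0; rewrite -/s -/g.
  by have -> : (n - s = a)%N by rewrite /a nks km.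
have cE2 : c = (s * 'C(b, m))%N.
  have := mul_bin_diag n m; rewrite -km -cE nks mulnAC.
  have -> : (k * s).-1 = b by rewrite /b km subn1.
  by rewrite -mulnA => /eqP; rewrite eqn_pmul2l // mulnC => /eqP.
have ffi := ffact_ineq m s m s0 (leqnn m).
rewrite -/a -/b in ffi.
have pe := pow_le_e R m.
have eb : ('C(b, m)%:R : R) <= expR 1 * 'C(a, m)%:R.
  have hf : (0 : R) < m`!%:R by rewrite ltr0n fact_gt0.
  rewrite -(ler_pM2r hf) -mulrA -!natrM !bin_ffact.
  have hm : (0 : R) < m.+1%:R ^+ m by rewrite exprn_gt0 // ltr0n.
  rewrite -(ler_pM2r hm).
  have ffR : (b ^_ m)%:R * (m%:R) ^+ m <= (a ^_ m)%:R * (m.+1%:R ^+ m) :> R.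
    by rewrite -!natrX -!natrM ler_nat.
  have hb : (0 : R) <= (b ^_ m)%:R by [].
  have hmm : (0 : R) <= m%:R ^+ m by rewrite exprn_ge0.
  have he : (0 : R) <= expR 1 by rewrite expR_ge0.
  apply: (le_trans (_ : _ <= (b ^_ m)%:R * (expR 1 * m%:R ^+ m))).
    by rewrite ler_wpM2l.
  rewrite mulrCA -mulrA; apply: ler_wpM2l => //.
have pge : (#|A|%:R / (s%:R * expR 1) : R) <= p.
  rewrite /p ler_pdivlMr // cE2 natrM.
  apply: (le_trans (_ : _ <= #|A|%:R * 'C(a, m)%:R)); last first.
    by rewrite -natrM ler_nat.
  rewrite mulrAC ler_pdivrMr ?mulr_gt0 ?ltr0n ?expR_gt0 //.
  by rewrite -mulrA ler_wpM2l // mulrCA ler_wpM2l // mulrC.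
set L := ln (1 / eps).
have L0 : 0 < L.
  by apply: ln_gt0; rewrite ltr_pdivlMr // mul1r.
have pi0 := pi_gt0 R.
have pi3 := pi_lt165 R.
have e4 := expR4_ge R.
have e1p : 0 < expR (1 : R) by apply: expR_gt0.
have e5 : expR (5 : R) = expR 4 * expR 1 by rewrite -expRD; congr expR; lra.
have sR : (0 : R) < s%:R by rewrite ltr0n.
have aR : (0 : R) < #|A|%:R by rewrite ltr0n.
have ptL : L <= p * t%:R.
  apply: (le_trans _ (ler_wpM2l p0 ht)).
  apply: (le_trans _ (ler_wpM2r _ pge)); last first.
    by apply: mulr_ge0; [apply: mulr_ge0; [rewrite divr_ge0 ?expR_ge0 // mulr_ge0 // sqr_ge0 | exact: ltW] | rewrite divr_ge0].
  rewrite e5.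
  have key : forall P : R, 0 < P -> #|A|%:R / (s%:R * expR 1) * (expR 4 * expR 1 / P * L * (s%:R / #|A|%:R))
      = expR 4 / P * L.
    move=> P P0; field; rewrite ?(gt_eqF P0) ?(gt_eqF aR) ?(gt_eqF sR) ?(gt_eqF e1p) //.
  rewrite key; last by rewrite mulr_gt0 // exprn_gt0.
  rewrite -[X in X <= _]mul1r ler_wpM2r ?ltW //.
  rewrite ltr_pdivlMr ?mulr_gt0 ?exprn_gt0 // mul1r.
  have : pi * pi < (16 / 5) * (16 / 5) :> R by nra.
  rewrite !expr2; lra.
have q0 : 0 <= 1 - p by rewrite subr_ge0.
have : (1 - p) ^+ t <= eps.
  apply: (le_trans (_ : _ <= expR (- p) ^+ t)).
    by apply: lerXn2r; rewrite ?nnegrE ?expR_ge0 // -[1 - p]addrC; rewrite addrC expR_ge1Dx.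
  rewrite -expRM_natl.
  apply: (le_trans (_ : _ <= expR (- L))); first by rewrite ler_expR; lra.
  rewrite expRN /L lnK ?posrE ?divr_gt0 //.
  by rewrite div1r invrK.
lra.
Qed.

Theorem lemma1 (R : realType) (n : nat) (S1 S2 : {set 'I_n})
  (hS1 : S1 != finset.set0) (hS2 : S2 != finset.set0) (hdisj : [disjoint S1 & S2])
  (hdiv : (#|S1| + #|S2| %| n)%N)
  (i : bool) (eps : R) (t : nat) (heps : 0 < eps) :
  let s := (#|S1| + #|S2|)%N in
  let Si := if i then S1 else S2 in
  let Sic := if i then S2 else S1 in
  expR 5 / (4 * pi ^+ 2) * ln (1 / eps) * (s%:R / (#|Si|)%:R) <= t%:R ->
  1 - eps <= @success_prob R n t (n %/ s)%N Si Sic.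
Proof.
move=> s Si Sic; rewrite /s /Si /Sic; clear s Si Sic; case: i => /=.
  exact: main_gen.
rewrite addnC; apply: main_gen => //; first by rewrite disjoint_sym.
by rewrite addnC.
Qed.
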